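(* There is no line $\ell$ of $\mathrm{PG}(3,q)$ with plane orbit distribution $OD_2(\ell)=[1,0,0,d_2,e_2]$ with $d_2\ge 1$.
   Context: Let $q$ be a power of a prime $p\neq 2,3$. In $\mathrm{PG}(3,q)$ with coordinates $(Y_0,\dots,Y_3)$, the twisted cubic is $\mathcal{C}=\{(1,t,t^2,t^3):t\in\mathbb{F}_q\}\cup\{(0,0,0,1)\}$. Osculating planes: $\Pi(t):-t^3Y_0+3t^2Y_1-3tY_2+Y_3=0$ ($t\in\mathbb{F}_q$), $\Pi(\infty):Y_0=0$. Plane classes: $\mathcal{H}_1$ = osculating planes; $\mathcal{H}_2$ = planes meeting $\mathcal{C}$ in exactly two points; $\mathcal{H}_3$ = planes meeting $\mathcal{C}$ in exactly three points; $\mathcal{H}_4$ = non-osculating planes meeting $\mathcal{C}$ in exactly one point; $\mathcal{H}_5$ = planes disjoint from $\mathcal{C}$. $OD_2(\ell)=[a_2,b_2,c_2,d_2,e_2]$ lists the numbers of planes through $\ell$ in $\mathcal{H}_1,\dots,\mathcal{H}_5$ respectively. *)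

(* Defs.v *)
From HB Require Import structures.
From mathcomp Require Import all_boot all_order all_algebra all_field.
Set Implicit Arguments. Unset Strict Implicit. Unset Printing Implicit Defensive.
Import GRing.Theory.
Local Open Scope ring_scope.

(* Points and planes are represented by nonzero row vectors 'rV[F]_4;
   a projective point/plane is counted once via its normalized
   representative (first nonzero coordinate equal to 1). *)

Section PG3.
Variable F : finFieldType.

(* incidence: plane a contains point x *)
Definition dot4 (a x : 'rV[F]_4) : F := \sum_(i < 4) a 0 i * x 0 i.

Definition normalized (a : 'rV[F]_4) : bool :=
  [exists i : 'I_4, (a 0 i == 1) && [forall j : 'I_4, (j < i)%N ==> (a 0 j == 0)]].

Definition cubicPt (t : option F) : 'rV[F]_4 :=
  match t with
  | Some t => \row_(i < 4) [:: 1; t; t ^+ 2; t ^+ 3]`_i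
  | None => \row_(i < 4) [:: 0; 0; 0; 1]`_i
  end.

Definition oscPlane (t : option F) : 'rV[F]_4 :=
  match t with
  | Some t => \row_(i < 4) [:: - t ^+ 3; 3%:R * t ^+ 2; - (3%:R * t); 1]`_i
  | None => \row_(i < 4) [:: 1; 0; 0; 0]`_i
  end.

Definition nmeet (a : 'rV[F]_4) : nat :=
  #|[set t : option F | dot4 a (cubicPt t) == 0]|.

Definition inH1 (a : 'rV[F]_4) : bool :=
  [exists t : option F, exists c : F, a == c *: oscPlane t].
Definition inH2 (a : 'rV[F]_4) : bool := nmeet a == 2%N.
Definition inH3 (a : 'rV[F]_4) : bool := nmeet a == 3%N.
Definition inH4 (a : 'rV[F]_4) : bool := ~~ inH1 a && (nmeet a == 1%N).
Definition inH5 (a : 'rV[F]_4) : bool := nmeet a == 0%N.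

(* a line is the row space of a rank-2 matrix L : 'M_(2,4);
   the plane a contains the line iff it contains both spanning points *)
Definition planeThrough (L : 'M[F]_(2,4)) (a : 'rV[F]_4) : bool :=
  L *m a^T == 0.

Definition countPlanes (L : 'M[F]_(2,4)) (P : 'rV[F]_4 -> bool) : nat :=
  #|[set a : 'rV[F]_4 | [&& normalized a, planeThrough L a & P a]]|.

Definition OD2 (L : 'M[F]_(2,4)) : seq nat :=
  [:: countPlanes L inH1; countPlanes L inH2; countPlanes L inH3;
      countPlanes L inH4; countPlanes L inH5].

End PG3.

(* Main.v *)
Require Import Defs.
From HB Require Import structures.
From mathcomp Require Import all_boot all_order all_algebra all_field.
From mathcomp Require Import ring zify.
Set Implicit Arguments. Unset Strict Implicit. Unset Printing Implicit Defensive.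
Import GRing.Theory.
Local Open Scope ring_scope.


Section Sq.
Variable F : finFieldType.

Lemma char2 (h2 : 2%N \notin [pchar F]) : (2%:R : F) != 0.
Proof. apply: contra h2 => H; by rewrite inE /= H. Qed.
Lemma char3 (h3 : 3%N \notin [pchar F]) : (3%:R : F) != 0.
Proof. apply: contra h3 => H; by rewrite inE /= H. Qed.

Lemma card_squares (two : (2%:R : F) != 0) :
  (#|F| < 2 * #|[set x ^+ 2 | x : F]|)%N.
Proof.
set A := [set x ^+ 2 | x : F].
pose f := fun x : F => (x ^+ 2, enum_rank x < enum_rank (- x))%N.
have finj : injective f.
  move=> x y [] /eqP; rewrite -subr_eq0 subr_sqr mulf_eq0 subr_eq0 => /orP[/eqP//|].
  rewrite addr_eq0 => /eqP -> /=.
  have [->|nz] := eqVneq y 0; first by rewrite oppr0.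
  rewrite opprK => E.
  have : (enum_rank (- y) != enum_rank y).
    apply/eqP => /enum_rank_inj/eqP; rewrite eq_sym -addr_eq0 -mulr2n -mulr_natr mulf_eq0.
    by rewrite (negPf nz) (negPf two).
  move=> neq; have neq' : (nat_of_ord (enum_rank (- y)) != enum_rank y) by [].
  move: E neq'; case: ltngtP => //; case: ltngtP => //; lia.
have sub : [set f x | x in F] \subset setX A [set: bool] :\ (0, true).
  apply/subsetP => z /imsetP[x _ ->]; rewrite !inE /f /=.
  apply/andP; split.
    apply/negP => /eqP [] /eqP; rewrite sqrf_eq0 => /eqP ->; by rewrite oppr0 ltnn.
  apply/andP; split => //; by apply/imsetP; exists x.
have := subset_leq_card sub; rewrite card_imset // => H.
have := cardsD1 ((0:F),true) (setX A [set: bool]); rewrite !inE /= andbT.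
have -> : (0:F) \in A by apply/imsetP; exists 0 => //; rewrite expr0n.
rewrite cardsX cardsT card_bool => E.
rewrite mulnC E /= add1n ltnS; exact: H.
Qed.

Lemma sum_sq (two : (2%:R : F) != 0) (e d : F) : e != 0 ->
  exists X Y : F, X ^+ 2 + e * Y ^+ 2 = d.
Proof.
move=> ne.
set A := [set x ^+ 2 | x : F].
set B := [set d - e * z | z in A].
have cB : #|B| = #|A|.
  rewrite card_imset // => z1 z2 H; apply: (mulfI ne).
  by rewrite -[e * z1](subKr d) H subKr.
have := cardsUI A B; rewrite cB.
have := card_squares two; rewrite -/A => H1.
have : (#|A :|: B| <= #|F|)%N by rewrite -cardsT subset_leq_card // subsetT.
case: (set_0Vmem (A :&: B)) => [->|[w]]; first by rewrite cards0; lia.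
rewrite inE => /andP[/imsetP[X _ ->] /imsetP[z /imsetP[Y _ ->] E]] _ _.
by exists X, Y; rewrite E subrK.
Qed.

Lemma conic_sol (two : (2%:R : F) != 0) (three : (3%:R : F) != 0) (c : F) :
  c != 0 -> exists x y : F, x != y /\ x ^+ 2 + x * y + y ^+ 2 = c.
Proof.
move=> nc.
have [X [Y E]] := sum_sq two (4%:R * c) three.
have four : (4%:R : F) != 0 by rewrite (_ : 4 = 2 * 2)%N // natrM mulf_neq0.
have E2 : ((X - Y) / 2%:R) ^+ 2 + (X - Y) / 2%:R * Y + Y ^+ 2 = c.
  apply: (mulfI four); rewrite -E; field; exact: two.
have [exy|nxy] := eqVneq ((X - Y) / 2%:R) Y; last by exists ((X - Y) / 2%:R), Y.
exists (- 2%:R * Y), Y; split; last by rewrite -E2 exy; ring.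
apply/negP => /eqP H.
have : 3%:R * Y = 0 by rewrite (_ : 3%:R * Y = Y - (- 2%:R * Y)); [rewrite H subrr | ring].
move/eqP; rewrite mulf_eq0 (negPf three) /= => /eqP Y0.
by move: E2 nc; rewrite exy Y0; rewrite !(mul0r, expr0n, addr0) /= => <-; rewrite eqxx.
Qed.


Lemma conic2 (two : (2%:R : F) != 0) (three : (3%:R : F) != 0) (a b g : F) :
  a != 0 -> b ^+ 2 != 3%:R * a * g ->
  exists X Y : F, X != Y /\ a * (X ^+ 2 + X * Y + Y ^+ 2) + b * (X + Y) + g = 0.
Proof.
move=> na nb.
have nc : (b ^+ 2 - 3%:R * a * g) / (3%:R * a ^+ 2) != 0.
  by rewrite mulf_neq0 ?invr_eq0 ?mulf_neq0 ?expf_neq0 // subr_eq0.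
have [x [y [nxy E]]] := conic_sol two three nc.
exists (x - b / (3%:R * a)), (y - b / (3%:R * a)); split.
  by apply: contra nxy => /eqP H; apply/eqP; apply: (addIr (- (b / (3%:R * a)))).
apply: (@eq_trans _ _ (a * (x ^+ 2 + x * y + y ^+ 2 - (b ^+ 2 - 3%:R * a * g) / (3%:R * a ^+ 2)))); last by rewrite E subrr mulr0.
field; by rewrite three na.
Qed.

End Sq.


Section Geo.
Variable F : finFieldType.

Definition i0 : 'I_4 := @Ordinal 4 0 isT.
Definition i1 : 'I_4 := @Ordinal 4 1 isT.
Definition i2 : 'I_4 := @Ordinal 4 2 isT.
Definition i3 : 'I_4 := @Ordinal 4 3 isT.

Lemma sum4 (f : 'I_4 -> F) : \sum_(i < 4) f i = f i0 + f i1 + f i2 + f i3.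
Proof.
rewrite !big_ord_recl big_ord0 addr0 !addrA.
by congr (_ + _ + _ + _); congr f; apply/val_inj.
Qed.

Lemma dotS (a : 'rV[F]_4) t : dot4 a (cubicPt (Some t)) =
  a 0 i0 + a 0 i1 * t + a 0 i2 * t ^+ 2 + a 0 i3 * t ^+ 3.
Proof. by rewrite /dot4 sum4 /= !mxE /= mulr1. Qed.

Lemma dotN (a : 'rV[F]_4) : dot4 a (cubicPt None) = a 0 i3.
Proof. by rewrite /dot4 sum4 /= !mxE /= !mulr0 mulr1 !add0r. Qed.

Lemma dot_lin (l m : F) (a b x : 'rV[F]_4) :
  dot4 (l *: a + m *: b) x = l * dot4 a x + m * dot4 b x.
Proof.
rewrite /dot4 !mulr_sumr -big_split; apply: eq_bigr => i _; rewrite !mxE /=; by rewrite mulrDl !mulrA.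
Qed.

Lemma pt_lin (L : 'M[F]_(2,4)) (l m : F) (a b : 'rV[F]_4) :
  planeThrough L a -> planeThrough L b -> planeThrough L (l *: a + m *: b).
Proof.
rewrite /planeThrough => /eqP Ha /eqP Hb.
by rewrite linearD !linearZ /= mulmxDr -!scalemxAr Ha Hb !scaler0 addr0.
Qed.

Lemma coord_eq0 (a : 'rV[F]_4) :
  a 0 i0 = 0 -> a 0 i1 = 0 -> a 0 i2 = 0 -> a 0 i3 = 0 -> a = 0.
Proof.
move=> h0 h1 h2 h3; apply/rowP => i; rewrite mxE.
case: i => [[|[|[|[|//]]]]] Hi.
- by rewrite -h0; congr (a 0 _); apply/val_inj.
- by rewrite -h1; congr (a 0 _); apply/val_inj.
- by rewrite -h2; congr (a 0 _); apply/val_inj.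
- by rewrite -h3; congr (a 0 _); apply/val_inj.
Qed.


Lemma norm_at (a : 'rV[F]_4) (i : 'I_4) : a 0 i != 0 ->
  (forall j : 'I_4, (j < i)%N -> a 0 j = 0) -> normalized ((a 0 i)^-1 *: a).
Proof.
move=> nz hj; apply/existsP; exists i; rewrite mxE mulVf // eqxx /=.
by apply/forallP => j; apply/implyP => /hj hj'; rewrite mxE hj' mulr0.
Qed.

Lemma ord4P (P : 'I_4 -> Prop) : P i0 -> P i1 -> P i2 -> P i3 -> forall j, P j.
Proof.
move=> p0 p1 p2 p3 [[|[|[|[|//]]]] Hj].
- by rewrite (_ : Ordinal Hj = i0) //; apply/val_inj.
- by rewrite (_ : Ordinal Hj = i1) //; apply/val_inj.
- by rewrite (_ : Ordinal Hj = i2) //; apply/val_inj.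
- by rewrite (_ : Ordinal Hj = i3) //; apply/val_inj.
Qed.

Lemma normalize (a : 'rV[F]_4) : a != 0 -> exists k, k != 0 /\ normalized (k *: a).
Proof.
move=> na.
have [h0|h0] := eqVneq (a 0 i0) 0; last first.
  exists (a 0 i0)^-1; split; first by rewrite invr_eq0.
  by apply: norm_at => // j; case: j => [[]].
have [h1|h1] := eqVneq (a 0 i1) 0; last first.
  exists (a 0 i1)^-1; split; first by rewrite invr_eq0.
  apply: norm_at => //; apply: ord4P => //.
have [h2|h2] := eqVneq (a 0 i2) 0; last first.
  exists (a 0 i2)^-1; split; first by rewrite invr_eq0.
  apply: norm_at => //; apply: ord4P => //.
have [h3|h3] := eqVneq (a 0 i3) 0; last first.
  exists (a 0 i3)^-1; split; first by rewrite invr_eq0.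
  apply: norm_at => //; apply: ord4P => //.
by move: na; rewrite (coord_eq0 h0 h1 h2 h3) eqxx.
Qed.

Lemma dot_scale (k : F) (a x : 'rV[F]_4) : dot4 (k *: a) x = k * dot4 a x.
Proof. by rewrite /dot4 mulr_sumr; apply: eq_bigr => i _; rewrite mxE mulrA. Qed.

Lemma nmeet_scale (k : F) (a : 'rV[F]_4) : k != 0 -> nmeet (k *: a) = nmeet a.
Proof.
move=> nk; rewrite /nmeet; apply: eq_card => t; rewrite !inE dot_scale.
by rewrite mulf_eq0 (negPf nk).
Qed.

Lemma pt_scale (L : 'M[F]_(2,4)) (k : F) (a : 'rV[F]_4) :
  planeThrough L a -> planeThrough L (k *: a).
Proof.
move=> h; have := pt_lin k 0 h h; by rewrite scale0r addr0.
Qed.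

Lemma nmeet_ge2 (a : 'rV[F]_4) (s u : option F) : s != u ->
  dot4 a (cubicPt s) = 0 -> dot4 a (cubicPt u) = 0 -> (2 <= nmeet a)%N.
Proof.
move=> nsu hs hu; rewrite /nmeet; have <- : #|[set s; u]| = 2%N by rewrite cards2 nsu.
apply: subset_leq_card; apply/subsetP => t; rewrite !inE.
by case/orP => /eqP ->; rewrite ?hs ?hu.
Qed.


Lemma nmeet_le3 (a : 'rV[F]_4) : a != 0 -> (nmeet a <= 3)%N.
Proof.
move=> na.
pose p : {poly F} := \poly_(i < 4) a 0 (inord i).
have hp t : dot4 a (cubicPt (Some t)) = p.[t].
  rewrite dotS horner_poly sum4 !inord_val /=.
  by rewrite expr0 mulr1 expr1.
have cp (j : 'I_4) : p`_j = a 0 j by rewrite coef_poly ltn_ord inord_val.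
have pn0 : p != 0.
  apply: contra na => /eqP p0; apply/eqP; apply: coord_eq0; by rewrite -cp p0 coef0.
set R := [set x : F | root p x].
have cR : (#|R| < size p)%N.
  rewrite cardE; apply: max_poly_roots => //; last exact: enum_uniq.
  by apply/allP => x; rewrite mem_enum inE.
have sp : (size p <= 4)%N by apply: size_poly.
rewrite /nmeet.
have [h3|h3] := eqVneq (a 0 i3) 0.
  have sp3 : (size p <= 3)%N.
    apply/leq_sizeP => j hj; rewrite coef_poly.
    case: ltnP => // hj4; have -> : inord j = i3 by apply/val_inj; rewrite /= inordK //; lia.
    exact: h3.
  have sub : [set t : option F | dot4 a (cubicPt t) == 0] \subset None |: [set Some x | x in R].
    apply/subsetP => -[t|] ; rewrite !inE //= hp => ht.
    by apply/imsetP; exists t; rewrite // inE.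
  apply: (leq_trans (subset_leq_card sub)).
  rewrite cardsU1 card_imset; last by move=> x y [].
  by case: (None \notin _); lia.
have sub : [set t : option F | dot4 a (cubicPt t) == 0] \subset [set Some x | x in R].
  apply/subsetP => -[t|] ; rewrite !inE //=.
    by rewrite hp => ht; apply/imsetP; exists t; rewrite // inE.
  by rewrite dotN (negPf h3).
apply: (leq_trans (subset_leq_card sub)).
rewrite card_imset; last by move=> x y [].
lia.
Qed.


Lemma count0 (L : 'M[F]_(2,4)) (P : 'rV[F]_4 -> bool) a :
  countPlanes L P = 0%N -> normalized a -> planeThrough L a -> P a = false.
Proof.
move/eqP; rewrite cards_eq0 => /eqP E na pa; apply/negbTE/negP => Pa.
have : a \in [set a : 'rV[F]_4 | [&& normalized a, planeThrough L a & P a]].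
  by rewrite inE na pa Pa.
by rewrite E inE.
Qed.

Lemma count1 (L : 'M[F]_(2,4)) (P : 'rV[F]_4 -> bool) :
  countPlanes L P = 1%N -> exists a0, [/\ normalized a0, planeThrough L a0, P a0 &
    forall a, normalized a -> planeThrough L a -> P a -> a = a0].
Proof.
move/eqP/cards1P => [a0 E].
have : a0 \in [set a : 'rV[F]_4 | [&& normalized a, planeThrough L a & P a]].
  by rewrite E inE.
rewrite inE => /and3P[n0 p0 P0]; exists a0; split => // a na pa Pa.
have : a \in [set a : 'rV[F]_4 | [&& normalized a, planeThrough L a & P a]].
  by rewrite inE na pa Pa.
by rewrite E inE => /eqP.
Qed.

Lemma normalized_neq0 (a : 'rV[F]_4) : normalized a -> a != 0.
Proof.
case/existsP => i /andP[/eqP h _]; apply/eqP => a0; move: h; rewrite a0 mxE.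
by move/eqP; rewrite eq_sym oner_eq0.
Qed.

Lemma osc_inj (three : (3%:R : F) != 0) (c1 c0 : F) t1 t0 :
  c1 *: oscPlane t1 = c0 *: oscPlane t0 -> c1 != 0 -> t1 = t0.
Proof.
move=> E n1.
have E3 := congr1 (fun v : 'rV[F]_4 => v 0 i3) E.
have E2 := congr1 (fun v : 'rV[F]_4 => v 0 i2) E.
have E0 := congr1 (fun v : 'rV[F]_4 => v 0 i0) E.
move: E3 E2 E0 => /=; clear E; case: t1 => [t1|]; case: t0 => [t0|]; rewrite /= !mxE /= ?mulr1 ?mulr0.
- by move=> e; subst c0 => /(mulfI n1)/oppr_inj/(mulfI three) ->.
- by move=> e; move: n1; rewrite e eqxx.
- by move=> e _; rewrite -e ?mul0r ?mulr1 => e'; move: n1; rewrite e' eqxx.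
- by [].
Qed.


Lemma ker_vec (L : 'M[F]_(2,4)) (e : 'rV[F]_4) :
  exists b : 'rV[F]_4, [/\ b != 0, planeThrough L b & dot4 b e = 0].
Proof.
pose M : 'M[F]_4 := \matrix_(i < 4, j < 4) [:: L 0 i; L 1 i; e 0 i; 0]`_j.
have dM : \det M == 0.
  rewrite (expand_det_col M i3) big1 // => i _; by rewrite mxE /= mul0r.
have [v nv vM] := det0P dM.
have col (j : 'I_4) : \sum_(i < 4) v 0 i * M i j = 0.
  by have := congr1 (fun A : 'rV[F]_4 => A 0 j) vM; rewrite !mxE.
exists v; split => //.
  apply/eqP/matrixP => r c; rewrite !mxE.
  have hr : forall r' : 'I_2, r' = 0 \/ r' = 1.
    by move=> [[|[|//]]] H; [left|right]; apply/val_inj.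
  case: (hr r) => ->.
    rewrite -[RHS](col i0); apply: eq_bigr => i _; rewrite !mxE /= mulrC.
    by rewrite (_ : c = 0) //; apply/val_inj; case: c => [[]].
  rewrite -[RHS](col i1); apply: eq_bigr => i _; rewrite !mxE /= mulrC.
  by rewrite (_ : c = 0) //; apply/val_inj; case: c => [[]].
rewrite -[RHS](col i2); apply: eq_bigr => i _; by rewrite !mxE.
Qed.


Lemma plane_contra (L : 'M[F]_(2,4)) (w : 'rV[F]_4) s u :
  countPlanes L (@inH2 F) = 0%N -> countPlanes L (@inH3 F) = 0%N ->
  w != 0 -> planeThrough L w -> s != u ->
  dot4 w (cubicPt s) = 0 -> dot4 w (cubicPt u) = 0 -> False.
Proof.
move=> c2 c3 nw pw nsu hs hu.
have [k [nk Nk]] := normalize nw.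
have pk := pt_scale k pw.
have := count0 c2 Nk pk; have := count0 c3 Nk pk.
rewrite /inH2 /inH3 nmeet_scale //.
have := nmeet_ge2 nsu hs hu; have := nmeet_le3 nw.
move=> h1 h2 /eqP h3 /eqP h4; lia.
Qed.

Lemma pencil (L : 'M[F]_(2,4)) (o b : 'rV[F]_4) (j : 'I_4) s u :
  countPlanes L (@inH2 F) = 0%N -> countPlanes L (@inH3 F) = 0%N ->
  planeThrough L o -> planeThrough L b -> b != 0 -> o 0 j = 1 -> b 0 j = 0 ->
  s != u ->
  dot4 o (cubicPt s) * dot4 b (cubicPt u) = dot4 o (cubicPt u) * dot4 b (cubicPt s) ->
  dot4 o (cubicPt s) != 0 -> False.
Proof.
move=> c2 c3 po pb nb oj bj nsu E nf.
set w := dot4 b (cubicPt s) *: o + (- dot4 o (cubicPt s)) *: b.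
apply: (@plane_contra L w s u) => //.
- apply/eqP => w0.
  have := congr1 (fun v : 'rV[F]_4 => v 0 j) w0; rewrite !mxE oj bj mulr1 mulr0 addr0 => g0.
  move: w0; rewrite /w g0 scale0r add0r => /eqP; rewrite scaler_eq0 oppr_eq0 (negPf nf) /=.
  by rewrite (negPf nb).
- exact: pt_lin.
- by rewrite /w dot_lin; ring.
- by rewrite /w dot_lin (mulrC (dot4 b _)) -E; ring.
Qed.


Lemma osc_contra (three : (3%:R : F) != 0) (L : 'M[F]_(2,4)) (w : 'rV[F]_4) m t1 t0 :
  countPlanes L (@inH1 F) = 1%N -> planeThrough L (oscPlane t0) ->
  w != 0 -> planeThrough L w -> w = m *: oscPlane t1 -> t1 != t0 -> False.
Proof.
move=> c1 p0 nw pw wE nt.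
have [a0 [_ _ _ U]] := count1 c1.
have [k [nk Nk]] := normalize nw.
have o0 : oscPlane t0 != 0.
  apply/eqP => E; have E3 := congr1 (fun v : 'rV[F]_4 => v 0 i3) E.
  have E0 := congr1 (fun v : 'rV[F]_4 => v 0 i0) E.
  move: E3 E0; case: (t0) => [t|]; rewrite /= !mxE /= => h1 h2; move/eqP: h1; move/eqP: h2;
    rewrite ?oner_eq0 // => _ /eqP; rewrite oner_eq0.
have [k' [nk' Nk']] := normalize o0.
have e1 := U _ Nk (pt_scale k pw).
have e2 := U _ Nk' (pt_scale k' p0).
have nm : m != 0 by apply: contra nw => /eqP m0; rewrite wE m0 scale0r.
have h1 : inH1 (k *: w).
  apply/existsP; exists t1; apply/existsP; exists (k * m); by rewrite wE scalerA.
have h2 : inH1 (k' *: oscPlane t0).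
  by apply/existsP; exists t0; apply/existsP; exists k'.
have E1 := e1 h1. have E2 := e2 h2.
have : (k * m) *: oscPlane t1 = k' *: oscPlane t0.
  by rewrite -scalerA -wE E1 E2.
move/osc_inj => /(_ three (mulf_neq0 nk nm)) E; by rewrite E eqxx in nt.
Qed.


End Geo.


Lemma caseNone (F : finFieldType) (two : (2%:R : F) != 0) (three : (3%:R : F) != 0)
  (L : 'M[F]_(2,4)) :
  countPlanes L (@inH1 F) = 1%N -> countPlanes L (@inH2 F) = 0%N ->
  countPlanes L (@inH3 F) = 0%N -> planeThrough L (oscPlane None) -> False.
Proof.
move=> c1 c2 c3 po.
have [b [nb pb hb]] := ker_vec L (oscPlane None).
have hb0 : b 0 i0 = 0.
  by move: hb; rewrite /dot4 sum4 !mxE /= mulr1 !mulr0 !addr0.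
have oj : @oscPlane F None 0 i0 = 1 by rewrite /oscPlane mxE.
have pen := pencil c2 c3 po pb nb oj hb0.
have fS t : dot4 (@oscPlane F None) (cubicPt (Some t)) = 1.
  by rewrite dotS !mxE /=; ring.
have fN : dot4 (@oscPlane F None) (cubicPt None) = 0 by rewrite dotN /oscPlane mxE.
have gS t : dot4 b (cubicPt (Some t)) = b 0 i1 * t + b 0 i2 * t ^+ 2 + b 0 i3 * t ^+ 3.
  by rewrite dotS hb0; ring.
have gN := dotN b.
have [b3|b3] := eqVneq (b 0 i3) 0.
  apply: (pen (Some 0) None) => //; last by rewrite fS oner_eq0.
  by rewrite fS fN gN b3; ring.
have [eq|neq] := eqVneq (b 0 i2 ^+ 2) (3%:R * b 0 i3 * b 0 i1); last first.
  have [X [Y [nXY E]]] := conic2 two three b3 neq.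
  apply: (pen (Some X) (Some Y)); last by rewrite fS oner_eq0.
    by apply: contra nXY => /eqP [] ->.
  rewrite !fS !mul1r !gS; apply/eqP; rewrite -subr_eq0; apply/eqP.
  rewrite (_ : _ - _ = (Y - X) * (b 0 i3 * (X ^+ 2 + X * Y + Y ^+ 2) + b 0 i2 * (X + Y) + b 0 i1)).
    by rewrite E mulr0.
  ring.
pose k := b 0 i2 / (3%:R * b 0 i3).
pose w := b + (b 0 i3 * k ^+ 3) *: oscPlane None.
apply: (@osc_contra F three L w (b 0 i3) (Some (- k)) None) => //.
- apply/eqP => /(congr1 (fun v : 'rV[F]_4 => v 0 i3)); rewrite !mxE /= mulr0 addr0.
  by move/eqP; rewrite (negPf b3).
- by have := pt_lin 1 (b 0 i3 * k ^+ 3) pb po; rewrite scale1r.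
- apply/rowP; apply: ord4P; rewrite !mxE /=.
  + by rewrite hb0; ring.
  + have e1 : b 0 i1 = b 0 i2 ^+ 2 / (3%:R * b 0 i3).
      by rewrite eq; field; rewrite three b3.
    by rewrite e1 /k; field; rewrite three b3.
  + by rewrite /k; field; rewrite three b3.
  + by ring.
Qed.

Lemma caseSome (F : finFieldType) (two : (2%:R : F) != 0) (three : (3%:R : F) != 0)
  (L : 'M[F]_(2,4)) (t0 : F) :
  countPlanes L (@inH1 F) = 1%N -> countPlanes L (@inH2 F) = 0%N ->
  countPlanes L (@inH3 F) = 0%N -> planeThrough L (oscPlane (Some t0)) -> False.
Proof.
move=> c1 c2 c3 po.
have [b [nb pb hb]] := ker_vec L (cubicPt (None : option F)).
have hb3 : b 0 i3 = 0 by rewrite -dotN.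
have oj : @oscPlane F (Some t0) 0 i3 = 1 by rewrite /oscPlane mxE.
have pen := pencil c2 c3 po pb nb oj hb3.
have fS t : dot4 (@oscPlane F (Some t0)) (cubicPt (Some t)) = (t - t0) ^+ 3.
  by rewrite dotS /oscPlane !mxE /=; ring.
have fN : dot4 (@oscPlane F (Some t0)) (cubicPt None) = 1 by rewrite dotN.
have [A eA] : {A | A = b 0 i0 + b 0 i1 * t0 + b 0 i2 * t0 ^+ 2} by eexists.
have [B eB] : {B | B = b 0 i1 + 2%:R * b 0 i2 * t0} by eexists.
have [G eG] : {G | G = b 0 i2} by eexists.
have e2 : b 0 i2 = G by [].
have e1 : b 0 i1 = B - 2%:R * G * t0 by rewrite eB eG; ring.
have e0 : b 0 i0 = A - B * t0 + G * t0 ^+ 2 by rewrite eA eB eG; ring.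
have gS t : dot4 b (cubicPt (Some t)) = A + B * (t - t0) + G * (t - t0) ^+ 2.
  by rewrite dotS hb3 e0 e1 e2; ring.
have gN : dot4 b (cubicPt None) = 0 by rewrite dotN.
have [A0|nA] := eqVneq A 0.
  apply: (pen None (Some t0)) => //; last by rewrite fN oner_eq0.
  by rewrite fN fS gN gS A0; ring.
have [eq|neq] := eqVneq (B ^+ 2) (3%:R * A * G); last first.
  have [X [Y [nXY E]]] := conic2 two three nA neq.
  have sub t : t0 + t - t0 = t by rewrite addrC addKr.
  pose phi (Z : F) := if Z == 0 then None else Some (t0 + Z^-1).
  have fphi Z : dot4 (@oscPlane F (Some t0)) (cubicPt (phi Z)) != 0.
    rewrite /phi; have [Z0|nZ] := eqVneq Z 0; first by rewrite fN oner_eq0.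
    by rewrite fS addrC addKr expf_neq0 // invr_eq0.
  apply: (pen (phi X) (phi Y)) => //.
    rewrite /phi; have [X0|nX] := eqVneq X 0; have [Y0|nY] := eqVneq Y 0 => //.
    - by move: nXY; rewrite X0 Y0 eqxx.
    - apply: contra nXY => /eqP [] /addrI /invr_inj ->; by [].
  rewrite /phi; have [X0|nX] := eqVneq X 0; have [Y0|nY] := eqVneq Y 0.
  - by move: nXY; rewrite X0 Y0 eqxx.
  - rewrite fN gN gS mul1r mulr0 sub.
    move: E; rewrite X0 => E.
    rewrite (_ : _ + _ = (A * (0 ^+ 2 + 0 * Y + Y ^+ 2) + B * (0 + Y) + G) / Y ^+ 2).
      by rewrite E mul0r.
    by field.
  - rewrite fN gN gS mul1r mulr0 sub.
    move: E; rewrite Y0 => E.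
    rewrite (_ : _ + _ = (A * (X ^+ 2 + X * 0 + 0 ^+ 2) + B * (X + 0) + G) / X ^+ 2).
      by rewrite E mul0r.
    by field.
  - rewrite !fS !gS !sub.
    apply/eqP; rewrite -subr_eq0; apply/eqP.
    rewrite (_ : _ - _ = (Y - X) * (A * (X ^+ 2 + X * Y + Y ^+ 2) + B * (X + Y) + G) / (X ^+ 3 * Y ^+ 3)).
      by rewrite E mulr0 mul0r.
    by field; rewrite nX nY.
have eG' : G = B ^+ 2 / (3%:R * A) by rewrite eq; field; rewrite three nA.
have [B0|nB] := eqVneq B 0.
  have G0 : G = 0 by rewrite eG' B0 expr0n /= mul0r.
  apply: (@osc_contra F three L b A None (Some t0)) => //.
  apply/rowP; apply: ord4P; rewrite /oscPlane !mxE /=.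
  + by rewrite e0 B0 G0; ring.
  + by rewrite e1 B0 G0; ring.
  + by rewrite e2 G0; ring.
  + by rewrite hb3; ring.
pose k := B / (3%:R * A).
have nk : k != 0 by rewrite /k mulf_neq0 // invr_eq0 mulf_neq0.
pose w := b + (A * k ^+ 3) *: oscPlane (Some t0).
apply: (@osc_contra F three L w (A * k ^+ 3) (Some (t0 - k^-1)) (Some t0)) => //.
- apply/eqP => /(congr1 (fun v : 'rV[F]_4 => v 0 i3)); rewrite !mxE /= hb3 mulr1 add0r.
  by move/eqP; rewrite mulf_eq0 (negPf nA) expf_eq0 (negPf nk) andbF.
- by have := pt_lin 1 (A * k ^+ 3) pb po; rewrite scale1r.
- apply/rowP; apply: ord4P; rewrite /w /oscPlane !mxE /=.
  + by rewrite e0 eG' /k; field; rewrite three nA nB.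
  + by rewrite e1 eG' /k; field; rewrite three nA nB.
  + by rewrite e2 eG' /k; field; rewrite three nA nB.
  + by rewrite hb3; ring.
- apply/eqP => -[] /eqP; rewrite -subr_eq0 addrC addKr oppr_eq0 invr_eq0.
  by rewrite (negPf nk).
Qed.

Theorem mainTheorem9 (F : finFieldType)
  (h2 : 2%N \notin [pchar F]) (h3 : 3%N \notin [pchar F]) :
  ~ (exists (L : 'M[F]_(2,4)) (d e : nat),
       \rank L = 2%N /\ OD2 L = [:: 1%N; 0%N; 0%N; d; e] /\ (1 <= d)%N).
Proof.
move=> [L [d [e [_ [E _]]]]].
have two := char2 h2; have three := char3 h3.
rewrite /OD2 in E; case: E => c1 c2 c3 _ _.
have [a0 [N0 P0 H0 _]] := count1 c1.
case/existsP: H0 => t0 /existsP [c /eqP a0E].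
have nc : c != 0.
  by apply: contra (normalized_neq0 N0) => /eqP c0; rewrite a0E c0 scale0r.
have po : planeThrough L (oscPlane t0).
  by have := pt_scale c^-1 P0; rewrite a0E scalerA mulVf // scale1r.
case: t0 po {a0E} => [t0|] po.
  exact: (caseSome two three c1 c2 c3 po).
exact: (caseNone two three c1 c2 c3 po).
Qed.
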